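(* Let $X_1,\dots,X_N$ and $\sigma_1,\dots,\sigma_N$ be as in the context, and let $\widetilde{\mathcal H}$, $M_k,A_k,D_k$ and $\eta_k$ be as defined there. Let $R$ be a positive integer, let $\varepsilon\colon\{1,\dots,R\}\to\{1,*\}$ and $\iota\colon\{1,\dots,R\}\to\{1,\dots,N\}$ with $\iota(1)=\iota(R)=k$. Let $\pi\in NC(R)$ satisfy: (i) $\pi\in NC_{\mathrm{irr}}(R)$; (ii) for every block $B=(q_1<q_2<\dots<q_r)$ of $\pi$, $\iota(q_1)=\dots=\iota(q_r)$ and $\varepsilon(q_1)\ne\varepsilon(q_2)\ne\dots\ne\varepsilon(q_r)\ne\varepsilon(q_1)$. Define $\varphi_\pi\colon\{1,\dots,R\}\to\mathcal L(\widetilde{\mathcal H})$ by: $\varphi_\pi(j)=M_{\iota(j)}^{\varepsilon(j)}$ for $j\in\{1,R\}$; for $2\le j\le R-1$ with $\varepsilon(j)=1$, $\varphi_\pi(j)=D_{\iota(j)}$ if $j$ is the least element of its block of $\pi$, $A^*_{\iota(j)}$ if $j$ is the greatest element of its block, and $M_{\iota(j)}$ otherwise; for $2\le j\le R-1$ with $\varepsilon(j)=*$, $\varphi_\pi(j)=A_{\iota(j)}$ if $j$ is the least element of its block, $D^*_{\iota(j)}$ if $j$ is the greatest element of its block, and $M^*_{\iota(j)}$ otherwise. Then $$\kappa_\pi[X_{\iota(1)}^{\varepsilon(1)},\dots,X_{\iota(R)}^{\varepsilon(R)}]=\langle\varphi_\pi(1)\cdots\varphi_\pi(R)\eta_k,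\eta_k\rangle.$$
   Context: $(\mathcal M,\tau)$ is a tracial $W^*$-probability space, $X_1,\dots,X_N\in\mathcal M$ are $*$-free (bounded) $R$-diagonal elements, and $\sigma_1,\dots,\sigma_N$ are compactly supported symmetric finite positive Borel measures on $\mathbf{R}$ such that for every $k$, every $r\ge1$ and every cyclically alternating $\varepsilon(1),\dots,\varepsilon(r)\in\{1,*\}$ (i.e. $\varepsilon(j)\ne\varepsilon(j+1)$ and $\varepsilon(r)\ne\varepsilon(1)$), the free cumulant satisfies $\kappa_r(X_k^{\varepsilon(1)},\dots,X_k^{\varepsilon(r)})=\int t^r\,d\sigma_k(t)$. Here $X^1=X$, $X^*$ is the adjoint, $\kappa_n$ are free cumulants w.r.t. $\tau$ and $\kappa_\pi$ is the multiplicative extension over the blocks of $\pi$. $NC(R)$ is the set of noncrossing partitions of $\{1,\dots,R\}$, $NC_{\mathrm{irr}}(R)$ those in which $1$ and $R$ lie in the same block. Fock model: let $\{e,f\}$ be an orthonormal basis of $\mathbf{C}^2$, $H_k^e=L^2(\sigma_k)\otimes\mathbf{C}e$, $H_k^f=L^2(\sigma_k)\otimes\mathbf{C}f$, $\mathcal H=\bigoplus_{k=1}^N(H_k^e\oplus H_k^f)$, $\widetilde{\mathcal H}=\bigoplus_{n\ge1}\mathcal H^{\otimes n}$ (no vacuum), with inner product $\langle\cdot,\cdot\rangle$. Let $\mathrm{id}_k\in L^2(\sigma_k)$ be $t\mapsto t$ and $1_k$ the constant function $1$; $m_k\colon H_k^e\to H_k^f$, $m_k(F\otimes e)=(\mathrm{id}_k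 F)\otimes f$. For $v_1,\dots,v_n\in\mathcal H$: $M_k(v_1\otimes\cdots\otimes v_n)=m_k(P_{H_k^e}v_1)\otimes v_2\otimes\cdots\otimes v_n$ (so $M_k^*(v_1\otimes\cdots\otimes v_n)=m_k^*(P_{H_k^f}v_1)\otimes v_2\otimes\cdots\otimes v_n$), $A_k^*(v_1\otimes\cdots\otimes v_n)=(\mathrm{id}_k\otimes f)\otimes v_1\otimes\cdots\otimes v_n$, $D_k^*(v_1\otimes\cdots\otimes v_n)=(\mathrm{id}_k\otimes e)\otimes v_1\otimes\cdots\otimes v_n$; their adjoints are $A_k(v_1\otimes\cdots\otimes v_n)=\langle v_1,\mathrm{id}_k\otimes f\rangle v_2\otimes\cdots\otimes v_n$, $D_k(v_1\otimes\cdots\otimes v_n)=\langle v_1,\mathrm{id}_k\otimes e\rangle v_2\otimes\cdots\otimes v_n$ for $n\ge2$, and $A_kv=D_kv=0$ for $v\in\mathcal H$. Here $P_{H}$ is orthogonal projection onto $H$. For an operator $Z$, $Z^1=Z$ and $Z^*$ is its adjoint. $\eta_k=1_k\otimes e+1_k\otimes f\in\mathcal H$. *)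

(* Defs.v *)
From HB Require Import structures.
From mathcomp Require Import all_boot all_order all_algebra.
From mathcomp Require Import all_classical all_reals all_analysis.
From mathcomp Require Import complex.
Set Implicit Arguments.
Unset Strict Implicit.
Unset Printing Implicit Defensive.
Import Order.TTheory GRing.Theory Num.Theory.
Local Open Scope ring_scope.

Definition cR {R : realType} (x : R) : R[i] := Complex x 0.

Section NCProb.
Variables (R : realType) (A : lalgType R[i]).

Definition is_star (st : A -> A) : Prop :=
  [/\ involutive st,
      (forall x y, st (x + y) = st x + st y),
      (forall (c : R[i]) x, st (c *: x) = c^* *: st x)
    & (forall x y, st (x * y) = st y * st x)].

Definition is_faithful_tracial_state (st : A -> A) (tau : A -> R[i]) : Prop :=
  [/\ (forall x y, tau (x + y) = tau x + tau y),
      (forall (c : R[i]) x, tau (c *: x) = c * tau x),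
      tau 1 = 1,
      (forall x, 0 <= tau (st x * x)) /\ (forall x, tau (st x * x) = 0 -> x = 0)
    & (forall x y, tau (x * y) = tau (y * x))].

(* X^1 = X (b = true), X^* (b = false) *)
Definition xpow (st : A -> A) (x : A) (b : bool) : A := if b then x else st x.

End NCProb.

(* Noncrossing partitions of 'I_n (= {1,...,n} shifted to {0,...,n-1}) *)
Definition noncrossing {n : nat} (P : {set {set 'I_n}}) : bool :=
  [forall B in P, forall B' in P, (B != B') ==>
     ~~ [exists a : 'I_n, exists b : 'I_n, exists c : 'I_n, exists d : 'I_n,
           [&& (a < b)%N, (b < c)%N, (c < d)%N, a \in B, c \in B, b \in B' & d \in B']]].

Definition is_NC {n : nat} (P : {set {set 'I_n}}) : bool :=
  finset.partition P [set: 'I_n] && noncrossing P.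

(* The restriction of a sequence to an index set, in increasing order
   (enum B lists the elements of B : {set 'I_n} increasingly). *)
Definition restr {T : Type} (x0 : T) (s : seq T) {n : nat} (B : {set 'I_n}) : seq T :=
  [seq nth x0 s (val i) | i <- enum B].

(* Free cumulants, defined by the moment-cumulant formula
     tau(a_1 ... a_n) = sum_{pi in NC(n)} kappa_pi[a_1,...,a_n],
   solved recursively for kappa_n = kappa_{1_n}.  The fuel argument
   only ensures structural recursion (blocks of pi <> 1_n are smaller). *)
Section Cumulants.
Variables (R : realType) (A : lalgType R[i]) (tau : A -> R[i]).

Fixpoint kappa_fuel (m : nat) (s : seq A) : R[i] :=
  match m with
  | 0 => 0
  | m'.+1 =>
      tau (\prod_(a <- s) a)
      - \sum_(P : {set {set 'I_(size s)}} | is_NC P && (P != [set [set: 'I_(size s)]]))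
          \prod_(B in P) kappa_fuel m' (restr 0 s B)
  end.

Definition kappa (s : seq A) : R[i] := kappa_fuel (size s) s.

Definition kappa_pi {n : nat} (P : {set {set 'I_n}}) (a : 'I_n -> A) : R[i] :=
  \prod_(B in P) kappa [seq a i | i <- enum B].

End Cumulants.

Definition cyc_alt (s : seq bool) : bool :=
  (0 < size s)%N &&
  [forall j : 'I_(size s), nth false s j != nth false s (j.+1 %% size s)].

Section FreeRdiag.
Variables (R : realType) (A : lalgType R[i]) (st : A -> A) (tau : A -> R[i]).

Definition in_star_alg (x a : A) : Prop :=
  exists ws : seq (R[i] * seq bool),
    a = \sum_(w <- ws) w.1 *: \prod_(b <- w.2) xpow st x b.

Definition star_free {N : nat} (X : 'I_N -> A) : Prop :=
  forall (m : nat) (i : 'I_m.+1 -> 'I_N) (a : 'I_m.+1 -> A),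
    (forall j : nat, (j < m)%N -> i (inord j) != i (inord j.+1)) ->
    (forall j, in_star_alg (X (i j)) (a j) /\ tau (a j) = 0) ->
    tau (\prod_(j < m.+1) a j) = 0.

Definition R_diagonal (x : A) : Prop :=
  forall s : seq bool, (0 < size s)%N -> ~~ cyc_alt s ->
    kappa tau [seq xpow st x b | b <- s] = 0.

End FreeRdiag.

Section Meas.
Variable R : realType.
Local Open Scope classical_set_scope.

Definition symmetric_measure (mu : {measure set R -> \bar R}) : Prop :=
  forall S : set R, measurable S -> mu [set - x | x in S] = mu S.

Definition compact_support (mu : {measure set R -> \bar R}) : Prop :=
  exists M : R, mu [set x | M < `|x|] = 0%E.

Definition cint (mu : {measure set R -> \bar R}) (h : R -> R[i]) : R[i] :=
  Complex (Rintegral mu setT (fun t => complex.Re (h t))) (Rintegral mu setT (fun t => complex.Im (h t))).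

Definition ipL2 (mu : {measure set R -> \bar R}) (F G : R -> R[i]) : R[i] :=
  cint mu (fun t => F t * (G t)^*).
End Meas.

(* A vector of H = (+)_k (H_k^e (+) H_k^f) is given by its components: *)
(* v k true in L^2(sigma_k) (the e-component), v k false (f-component). *)
(* An elementary tensor v_1 (x) ... (x) v_n is a seq of such vectors,   *)
(* and a vector of tilde H (algebraic span) a finite formal linear      *)
(* combination of elementary tensors of length >= 1.                    *)
Section Fock.
Variables (R : realType) (N : nat) (sigma : 'I_N -> {measure set R -> \bar R}).

Definition Hvec := 'I_N -> bool -> R -> R[i].
Definition fock := seq (R[i] * seq Hvec).

Definition ipH (v w : Hvec) : R[i] :=
  \sum_(k < N) \sum_(c : bool) ipL2 (sigma k) (v k c) (w k c).

Definition ipT (u w : seq Hvec) : R[i] :=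
  if size u == size w then \prod_(p <- zip u w) ipH p.1 p.2 else 0.

Definition ipF (x y : fock) : R[i] :=
  \sum_(p <- x) \sum_(q <- y) p.1 * (q.1)^* * ipT p.2 q.2.

Definition single (k : 'I_N) (c : bool) (F : R -> R[i]) : Hvec :=
  fun k' c' => if (k' == k) && (c' == c) then F else (fun _ => 0).

Definition id_k : R -> R[i] := fun t => cR t.
Definition one_k : R -> R[i] := fun _ => 1.

Definition m_k (k : 'I_N) (v : Hvec) : Hvec := single k false (fun t => cR t * v k true t).
Definition m_k_adj (k : 'I_N) (v : Hvec) : Hvec := single k true (fun t => cR t * v k false t).

Definition lin_ext (f : seq Hvec -> fock) (x : fock) : fock :=
  flatten [seq [seq (p.1 * q.1, q.2) | q <- f p.2] | p <- x].

Definition opM (k : 'I_N) : fock -> fock := lin_ext (fun u =>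
  match u with [::] => [::] | v :: r => [:: (1, m_k k v :: r)] end).
Definition opMs (k : 'I_N) : fock -> fock := lin_ext (fun u =>
  match u with [::] => [::] | v :: r => [:: (1, m_k_adj k v :: r)] end).
Definition opAs (k : 'I_N) : fock -> fock := lin_ext (fun u =>
  [:: (1, single k false id_k :: u)]).
Definition opDs (k : 'I_N) : fock -> fock := lin_ext (fun u =>
  [:: (1, single k true id_k :: u)]).
Definition opA (k : 'I_N) : fock -> fock := lin_ext (fun u =>
  match u with v :: (_ :: _) as r => [:: (ipH v (single k false id_k), r)] | _ => [::] end).
Definition opD (k : 'I_N) : fock -> fock := lin_ext (fun u =>
  match u with v :: (_ :: _) as r => [:: (ipH v (single k true id_k), r)] | _ => [::] end).

(* eta_k = 1_k (x) e + 1_k (x) f *)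
Definition eta_vec (k : 'I_N) : fock :=
  [:: (1, [:: fun k' (_ : bool) => if k' == k then one_k else (fun _ => 0)])].

(* phi_pi(j), for positions j : 'I_n.+1 (i.e. R = n+1, position j+1) *)
Definition phi {n : nat} (P : {set {set 'I_n.+1}}) (eps : 'I_n.+1 -> bool)
    (iota : 'I_n.+1 -> 'I_N) (j : 'I_n.+1) : fock -> fock :=
  let B := finset.pblock P j in
  let least := [forall i in B, (j <= i)%N] in
  let greatest := [forall i in B, (i <= j)%N] in
  if (j == ord0) || (j == ord_max) then
    (if eps j then opM (iota j) else opMs (iota j))
  else if eps j then
    (if least then opD (iota j) else if greatest then opAs (iota j) else opM (iota j))
  else
    (if least then opA (iota j) else if greatest then opDs (iota j) else opMs (iota j)).

Definition phi_prod {n : nat} (P : {set {set 'I_n.+1}}) (eps : 'I_n.+1 -> bool)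
    (iota : 'I_n.+1 -> 'I_N) (x : fock) : fock :=
  foldr (fun j y => phi P eps iota j y) x (enum 'I_n.+1).

End Fock.

(* Main.v *)
Require Import Defs.
From HB Require Import structures.
From mathcomp Require Import all_boot all_order all_algebra.
From mathcomp Require Import all_classical all_reals all_analysis.
From mathcomp Require Import complex.
Import Order.TTheory GRing.Theory Num.Theory.
Local Open Scope ring_scope.

Section FockLemmas.
Variables (R : realType) (N : nat) (sigma : 'I_N -> {measure set R -> \bar R}).

Lemma Rint0 (mu : {measure set R -> \bar R}) : Rintegral mu setT (fun _ => 0 : R) = 0.
Proof. by rewrite Rintegral_cst // mul0r. Qed.

Lemma cint_real (mu : {measure set R -> \bar R}) (f : R -> R) :
  cint mu (fun t => cR (f t)) = cR (Rintegral mu setT f).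
Proof. by rewrite /cint /cR /= Rint0. Qed.

Lemma cR_exp (t : R) m : cR t ^+ m = cR (t ^+ m).
Proof. by rewrite /cR !complexr0 -(rmorphXn (real_complex R)). Qed.

Lemma cR_mul (t u : R) : cR t * cR u = cR (t * u).
Proof. by rewrite /cR !complexr0 -(rmorphM (real_complex R)). Qed.

Lemma cR_conj (t : R) : Num.conj (cR t) = cR t.
Proof. by apply/eqP; rewrite -CrealE /cR complex_real. Qed.

Lemma ipL2_0l (mu : {measure set R -> \bar R}) G : ipL2 mu (fun _ => 0) G = 0.
Proof.
rewrite /ipL2 (_ : (fun t => _) = (fun t => cR 0)); last first.
  by apply: boolp.funext => t; rewrite mul0r.
by rewrite cint_real Rint0.
Qed.

Lemma ipL2_0r (mu : {measure set R -> \bar R}) F : ipL2 mu F (fun _ => 0) = 0.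
Proof.
rewrite /ipL2 (_ : (fun t => _) = (fun t => cR 0)); last first.
  by apply: boolp.funext => t; rewrite conjC0 mulr0.
by rewrite cint_real Rint0.
Qed.

Lemma ipL2_pow_id (mu : {measure set R -> \bar R}) m :
  ipL2 mu (fun t => cR t ^+ m) (@id_k R) = cR (Rintegral mu setT (fun t => t ^+ m.+1)).
Proof.
rewrite /ipL2 (_ : (fun t => _) = (fun t => cR (t ^+ m.+1))) ?cint_real //.
by apply: boolp.funext => t; rewrite /id_k /= cR_conj cR_exp cR_mul exprSr.
Qed.

Lemma ipL2_pow_one (mu : {measure set R -> \bar R}) m :
  ipL2 mu (fun t => cR t ^+ m) (@one_k R) = cR (Rintegral mu setT (fun t => t ^+ m)).
Proof.
rewrite /ipL2 (_ : (fun t => _) = (fun t => cR (t ^+ m))) ?cint_real //.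
by apply: boolp.funext => t; rewrite /one_k conjC1 mulr1 cR_exp.
Qed.

Lemma ipH_single k c F (w : Hvec R N) :
  ipH sigma (single k c F) w = ipL2 (sigma k) F (w k c).
Proof.
rewrite /ipH (bigD1 k) //= [X in _ + X]big1 => [|k' nk']; last first.
  by rewrite big_bool /single /= (negbTE nk') /= !ipL2_0l addr0.
rewrite big_bool /single /= eqxx /=.
by case: c => /=; rewrite ipL2_0l ?addr0 ?add0r.
Qed.

End FockLemmas.

Set Implicit Arguments.
Unset Strict Implicit.
Unset Printing Implicit Defensive.

Lemma enum_pw m (B : {set 'I_m}) : pairwise (fun a b : 'I_m => (a < b)%N) (enum B).
Proof.
have h : pairwise (fun a b : 'I_m => (a < b)%N) (enum 'I_m).
  have := iota_ltn_sorted 0 m; rewrite -(val_enum_ord m) sorted_pairwise; last exact: ltn_trans.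
  by rewrite pairwise_map.
rewrite -deprecated_filter_index_enum.
have -> : index_enum 'I_m = enum 'I_m by rewrite enumT /index_enum; unlock.
exact: pairwise_filter.
Qed.

Lemma pw_conv (T : eqType) (r1 r2 : rel T) (s : seq T) :
  (forall x y, x \in s -> y \in s -> r1 x y -> r2 x y) -> pairwise r1 s -> pairwise r2 s.
Proof.
elim: s => //= x s IH H /andP[ha hp]; apply/andP; split.
  apply/allP => y ys; apply: H; rewrite ?inE ?eqxx ?ys ?orbT //.
  by move/allP: ha; apply.
by apply: IH => // a b ha2 hb2; apply: H; rewrite ?inE ?ha2 ?hb2 ?orbT.
Qed.

Section Main.
Variables (R : realType) (N : nat) (sigma : 'I_N -> {measure set R -> \bar R}).
Variables (n : nat) (eps : 'I_n.+1 -> bool) (iota : 'I_n.+1 -> 'I_N).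
Variable (P : {set {set 'I_n.+1}}).
Hypothesis HNC : is_NC P.
Hypothesis Hirr : finset.pblock P ord0 = finset.pblock P ord_max.
Hypothesis Hblocks : forall B, B \in P ->
       (forall i j, i \in B -> j \in B -> iota i = iota j) /\
       cyc_alt [seq eps i | i <- enum B].

Definition B0 := finset.pblock P ord0.
Definition kB (B : {set 'I_n.+1}) := iota (odflt ord0 [pick i in B]).
Definition IB (B : {set 'I_n.+1}) : R[i] :=
  cR (Rintegral (sigma (kB B)) setT (fun t => t ^+ #|B|)).
Definition geq (j : nat) (B : {set 'I_n.+1}) := [set i in B | (j <= i)%N].
Definition vecof (j : nat) (e : {set 'I_n.+1} * bool) : Hvec R N :=
  single (kB e.1) e.2 (fun t => cR t ^+ #|geq j e.1|).
Definition openb (j : nat) (B : {set 'I_n.+1}) :=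
  [exists a in B, (a < j)%N] && [exists b in B, (j <= b)%N].
Definition iskey (j : nat) (B : {set 'I_n.+1}) (x : 'I_n.+1) :=
  [&& x \in B, (j <= x)%N & [forall i in B, (j <= i)%N ==> (x <= i)%N]].
Definition keyless (j : nat) (B B' : {set 'I_n.+1}) :=
  [exists x in B, (j <= x)%N && [forall y in B', (j <= y)%N ==> (x < y)%N]].
Definition closedAt (j : nat) (B : {set 'I_n.+1}) := [forall i in B, (j <= i)%N].
Definition coef (j : nat) := \prod_(B in P | (B != B0) && closedAt j B) IB B.

Definition Inv (j : nat) (x : fock R N) :=
  exists S : seq ({set 'I_n.+1} * bool),
  [/\ x = [:: (coef j, map (vecof j) S)],
      forall B, (B \in map fst S) = (B \in P) && openb j B,
      uniq (map fst S),
      forall e, e \in S -> exists x, iskey j e.1 x && (e.2 == ~~ eps x)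
    & pairwise (fun e e' => keyless j e.1 e'.1) S].

Lemma partP : [/\ finset.cover P = [set: 'I_n.+1], finset.trivIset P & (finset.set0 : {set _}) \notin P].
Proof. by move: HNC => /andP[/and3P[/eqP ? ? ?] _]. Qed.

Lemma blk_in x : finset.pblock P x \in P.
Proof. by case: partP => cP _ _; apply: pblock_mem; rewrite cP inE. Qed.

Lemma blk_mem x : x \in finset.pblock P x.
Proof. by case: partP => cP _ _; rewrite mem_pblock cP inE. Qed.

Lemma blk_def B x : B \in P -> x \in B -> finset.pblock P x = B.
Proof. by case: partP => _ tP _; apply: def_pblock. Qed.

Lemma blk_same B B' x : B \in P -> B' \in P -> x \in B -> x \in B' -> B = B'.
Proof. by move=> HB HB' xB xB'; rewrite -(blk_def HB xB) -(blk_def HB' xB'). Qed.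

Lemma kB_eq B x : B \in P -> x \in B -> kB B = iota x.
Proof.
move=> HB xB; rewrite /kB; case: pickP => [y yB|/(_ x)]; last by rewrite xB.
by rewrite /= ((Hblocks HB).1 y x yB xB).
Qed.

Lemma nc B B' (a b c d : 'I_n.+1) : B \in P -> B' \in P -> B != B' ->
  (a < b)%N -> (b < c)%N -> (c < d)%N -> a \in B -> c \in B -> b \in B' -> d \in B' -> False.
Proof.
move=> HB HB' nBB ab bc cd aB cB bB dB.
move: HNC => /andP[_ /forallP /(_ B) /implyP /(_ HB) /forallP /(_ B') /implyP /(_ HB')
  /implyP /(_ nBB) /negP]; apply.
apply/existsP; exists a; apply/existsP; exists b; apply/existsP; exists c; apply/existsP; exists d.
by rewrite ab bc cd aB cB bB dB.
Qed.

Lemma nsing B x : B \in P -> x \in B -> exists2 y, y \in B & y != x.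
Proof.
move=> HB xB; case: (boolP [exists y in B, y != x]) => [/exists_inP[y ? ?]|]; first by exists y.
rewrite negb_exists_in => /forall_inP h.
have eB : B = [set x].
  by apply/setP => y; rewrite inE; apply/idP/eqP => [/h/negPn/eqP //|->].
have := (Hblocks HB).2; rewrite eB enum_set1 /cyc_alt => /andP[_ /forallP /(_ ord0)].
by rewrite /= eqxx.
Qed.

Lemma alt B x y : B \in P -> x \in B -> y \in B -> (x < y)%N ->
  (forall z, z \in B -> (x < z)%N -> (y <= z)%N) -> eps x != eps y.
Proof.
move=> HB xB yB xy hz.
have hc : forall p, (p.+1 < size (enum B))%N ->
    eps (nth x (enum B) p) != eps (nth x (enum B) p.+1).
  move=> p hp; have hp' : (p < size [seq eps i | i <- enum B])%N by rewrite size_map ltnW.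
  have /andP[_ /forallP /(_ (Ordinal hp'))] := (Hblocks HB).2.
  by rewrite /= size_map modn_small // (nth_map x) ?(ltnW hp) // (nth_map x).
have [s [hc' sp me]] : exists s, [/\ forall p, (p.+1 < size s)%N ->
    eps (nth x s p) != eps (nth x s p.+1),
    pairwise (fun a b : 'I_n.+1 => (a < b)%N) s & forall z, (z \in s) = (z \in B)].
  by exists (enum B); split => //; [exact: enum_pw | move=> z; rewrite mem_enum].
have xs : x \in s by rewrite me.
move: hc' sp me; case/splitPr: xs => s1 s2 hc' sp me.
move: sp; rewrite pairwise_cat /= => /and3P[ha _ /andP[hx hs2]] {hc}.
have ys : y \in s1 ++ x :: s2 by rewrite me.
have ny : y != x by rewrite neq_ltn xy orbT.
have ys2 : y \in s2.
  move: ys; rewrite mem_cat inE (negbTE ny) /= => /orP[ys1|//].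
  move/allrelP: ha => /(_ y x ys1 (mem_head _ _)); rewrite ltnNge (ltnW xy) //.
case: s2 ys2 hx hs2 hc' me ha ys => // z s3 ys2 hx hs2 hc' me ha ys.
have zB : z \in B by rewrite -me mem_cat !inE eqxx !orbT.
have xz : (x < z)%N by move: hx => /= /andP[].
have yz := hz z zB xz.
have ezy : z = y.
  move: ys2; rewrite inE => /orP[/eqP -> //|ys3].
  move: hs2 => /= /andP[/allP /(_ y ys3) zy _].
  by move: yz; rewrite leqNgt zy.
have := hc' (size s1); rewrite size_cat /= !addnS !ltnS => /(_ (leq_addr _ _)).
rewrite !nth_cat ltnn ltnNge leqnSn /= subnn subSnn /=.
by rewrite ezy.
Qed.


Lemma n_pos : (0 < n)%N.
Proof.
rewrite lt0n; apply/negP => /eqP n0.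
have [y _ ny] := nsing (blk_in ord0) (blk_mem ord0).
have h : forall m, (m < n.+1)%N -> m = 0%N by move=> m; rewrite n0; case: m.
move: ny; have vy := h _ (ltn_ord y).
by have -> : y = ord0 by apply/ord_inj.
Qed.

Lemma ni_neq (i y : 'I_n.+1) (B' : {set 'I_n.+1}) : i \notin B' -> y \in B' -> y != i.
Proof. by move=> ni yB; apply/eqP => eyi; move: ni; rewrite -eyi yB. Qed.

Lemma noj_leq (i y : 'I_n.+1) : y != i -> (i <= y)%N = (i.+1 <= y)%N.
Proof.
move=> ny; rewrite leq_eqVlt.
have -> : (nat_of_ord i == nat_of_ord y) = false.
  by apply/negbTE; move: ny; apply: contra => /eqP h; apply/eqP/ord_inj.
by [].
Qed.

Lemma noj_lt (i y : 'I_n.+1) : y != i -> (y < i.+1)%N = (y < i)%N.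
Proof.
move=> ny; rewrite ltnS leq_eqVlt.
have -> : (nat_of_ord y == nat_of_ord i) = false.
  by apply/negbTE; move: ny; apply: contra => /eqP h; apply/eqP/ord_inj.
by [].
Qed.

Lemma geq_noj (i : 'I_n.+1) (B' : {set 'I_n.+1}) : i \notin B' -> geq i B' = geq i.+1 B'.
Proof.
move=> ni; apply/setP => y; rewrite !inE; case yB: (y \in B') => //=.
by rewrite noj_leq // (ni_neq ni yB).
Qed.

Lemma openb_noj (i : 'I_n.+1) (B' : {set 'I_n.+1}) : i \notin B' -> openb i B' = openb i.+1 B'.
Proof.
move=> ni; rewrite /openb; congr (_ && _); apply: eq_existsb => y;
  case yB: (y \in B') => //=.
  by rewrite noj_lt // (ni_neq ni yB).
by rewrite noj_leq // (ni_neq ni yB).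
Qed.

Lemma iskey_noj (i : 'I_n.+1) (B' : {set 'I_n.+1}) x : i \notin B' -> iskey i B' x = iskey i.+1 B' x.
Proof.
move=> ni; rewrite /iskey; case xB: (x \in B') => //=.
rewrite noj_leq ?(ni_neq ni xB) //; congr (_ && _); apply: eq_forallb => y.
by case yB: (y \in B') => //=; rewrite noj_leq // (ni_neq ni yB).
Qed.

Lemma keyless_noj (i : 'I_n.+1) (B1 B2 : {set 'I_n.+1}) : i \notin B1 -> i \notin B2 ->
  keyless i B1 B2 = keyless i.+1 B1 B2.
Proof.
move=> n1 n2; rewrite /keyless; apply: eq_existsb => x; case xB: (x \in B1) => //=.
rewrite noj_leq ?(ni_neq n1 xB) //; congr (_ && _); apply: eq_forallb => y.
by case yB: (y \in B2) => //=; rewrite noj_leq // (ni_neq n2 yB).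
Qed.

Lemma closed_noj (i : 'I_n.+1) (B' : {set 'I_n.+1}) : i \notin B' -> closedAt i B' = closedAt i.+1 B'.
Proof.
move=> ni; rewrite /closedAt; apply: eq_forallb => y.
by case yB: (y \in B') => //=; rewrite noj_leq // (ni_neq ni yB).
Qed.

Lemma closedS_false (i : 'I_n.+1) (B : {set 'I_n.+1}) : i \in B -> closedAt i.+1 B = false.
Proof. by move=> iB; apply/negbTE/negP => /forall_inP /(_ i iB); rewrite ltnn. Qed.

Lemma geq_split (i : 'I_n.+1) (B : {set 'I_n.+1}) : i \in B -> geq i B = i |: geq i.+1 B.
Proof.
move=> iB; apply/setP => y; rewrite !inE; case: (eqVneq y i) => [->|ny] /=.
  by rewrite iB leqnn.
by rewrite noj_leq.
Qed.

Lemma card_geq_split (i : 'I_n.+1) (B : {set 'I_n.+1}) : i \in B -> #|geq i B| = #|geq i.+1 B|.+1.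
Proof. by move=> iB; rewrite geq_split // cardsU1 !inE ltnn andbF. Qed.

Lemma notin_blk (i : 'I_n.+1) (B' : {set 'I_n.+1}) : B' \in P -> B' != finset.pblock P i -> i \notin B'.
Proof.
move=> HB' nB; apply/negP => iB'; move/eqP: nB; apply.
exact: blk_same HB' (blk_in i) iB' (blk_mem i).
Qed.

Lemma coef_eq (i : 'I_n.+1) : closedAt i (finset.pblock P i) = false -> coef i = coef i.+1.
Proof.
move=> cl; rewrite /coef; apply: eq_bigl => B'; case HB': (B' \in P) => //=.
case: (eqVneq B' (finset.pblock P i)) => [->|nB].
  by rewrite cl closedS_false ?blk_mem // !andbF.
by rewrite closed_noj // notin_blk.
Qed.

Lemma coef_close (i : 'I_n.+1) : finset.pblock P i != B0 -> closedAt i (finset.pblock P i) ->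
  coef i = IB (finset.pblock P i) * coef i.+1.
Proof.
move=> nB0 cl; rewrite /coef (bigD1 (finset.pblock P i)) /=; last by rewrite blk_in nB0 cl.
congr (_ * _); apply: eq_bigl => B'; case HB': (B' \in P) => //=.
case: (eqVneq B' (finset.pblock P i)) => [->|nB]; first by rewrite andbF closedS_false ?blk_mem // andbF.
by rewrite andbT closed_noj // notin_blk.
Qed.

Lemma keyless_head (i : 'I_n.+1) (B B' : {set 'I_n.+1}) : i \in B -> i \notin B' -> keyless i B B'.
Proof.
move=> iB ni; apply/exists_inP; exists i => //; rewrite leqnn /=.
by apply/forall_inP => y yB'; apply/implyP; rewrite noj_leq // (ni_neq ni yB').
Qed.

Lemma iskey_self (i : 'I_n.+1) (B : {set 'I_n.+1}) : i \in B -> iskey i B i.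
Proof. by move=> iB; rewrite /iskey iB leqnn /=; apply/forall_inP => y _; apply/implyP. Qed.

Lemma key_alt (i : 'I_n.+1) (B : {set 'I_n.+1}) x : B \in P -> i \in B -> iskey i.+1 B x -> eps i != eps x.
Proof.
move=> HB iB /and3P[xB ix /forall_inP hx].
apply: (alt HB iB xB ix) => z zB iz; exact: (implyP (hx z zB) iz).
Qed.

Definition rel_at (j : nat) := fun e e' : {set 'I_n.+1} * bool => keyless j e.1 e'.1.

Lemma tail_props (i : 'I_n.+1) (T : seq ({set 'I_n.+1} * bool)) :
  (forall e, e \in T -> e.1 \in P /\ e.1 != finset.pblock P i) ->
  (forall e, e \in T -> exists x, iskey i.+1 e.1 x && (e.2 == ~~ eps x)) ->
  pairwise (rel_at i.+1) T ->
  [/\ map (vecof i.+1) T = map (vecof i) T,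
      (forall e, e \in T -> exists x, iskey i e.1 x && (e.2 == ~~ eps x)),
      pairwise (rel_at i) T
    & forall e, e \in T -> i \notin e.1].
Proof.
move=> hT hk hp.
have ni : forall e, e \in T -> i \notin e.1.
  by move=> e eT; have [? ?] := hT e eT; apply: notin_blk.
split => //.
- by apply/eq_in_map => e eT; rewrite /vecof geq_noj ?ni.
- by move=> e eT; have [x hx] := hk e eT; exists x; rewrite iskey_noj ?ni.
- by apply: pw_conv hp => a b aT bT; rewrite /rel_at keyless_noj ?ni.
Qed.

Lemma single_ext (k1 k2 : 'I_N) c1 c2 (F1 F2 : R -> R[i]) :
  k1 = k2 -> c1 = c2 -> (forall t, F1 t = F2 t) -> single k1 c1 F1 = single k2 c2 F2.
Proof. by move=> -> -> /boolp.funext ->. Qed.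

Lemma head_blk (i : 'I_n.+1) S (B : {set 'I_n.+1}) :
  (forall B, (B \in map fst S) = (B \in P) && openb i.+1 B) ->
  pairwise (rel_at i.+1) S -> B \in P -> i \in B -> B \in map fst S ->
  (exists2 b, b \in B & (i < b)%N) -> exists bit S0, S = (B, bit) :: S0.
Proof.
move=> hS pw HB iB BS [b bB ib].
case: S hS pw BS => [|[H hb] S0] hS pw BS //=.
case: (eqVneq H B) => [->|nHB]; first by exists hb, S0.
exfalso.
have HS : H \in map fst ((H, hb) :: S0) by rewrite /= mem_head.
move: (HS); rewrite hS => /andP[HP /andP[/exists_inP[a aH ai] _]].
have BS0 : B \in map fst S0 by move: BS; rewrite /= inE eq_sym (negbTE nHB).
have [e eS0 eB] : exists2 e, e \in S0 & e.1 = B by move/mapP: BS0 => [e ? ->]; exists e.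
move: pw => /= /andP[/allP /(_ e eS0) kl _]; move: kl; rewrite /rel_at eB /=.
move=> /exists_inP[x xH /andP[ix /forall_inP hx]].
have xb := implyP (hx b bB) ib.
have iH : i \notin H.
  by apply/negP => iH; move/eqP: nHB; apply; exact: blk_same HP HB iH iB.
have ai' : (a < i)%N by rewrite -noj_lt // (ni_neq iH aH).
exact: (nc HP HB nHB ai' ix xb aH xH iB bB).
Qed.


Lemma step (i : 'I_n.+1) x : (0 < i)%N -> (i < n)%N -> Inv i.+1 x ->
  Inv i (phi sigma P eps iota i x).
Proof.
move=> i0 iN [S [-> hS uS kS pS]].
have ni0 : (i == ord0) = false by apply/negbTE/eqP => e; rewrite e in i0.
have niM : (i == ord_max) = false.
  by apply/negbTE/eqP => e; move: iN; rewrite e /= ltnn.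
rewrite /phi ni0 niM /=.
set B := finset.pblock P i.
have HB : B \in P := blk_in i.
have iB : i \in B := blk_mem i.
have kBi : kB B = iota i := kB_eq HB iB.
case: (boolP [forall y in B, (i <= y)%N]) => lst;
  case: (boolP [forall y in B, (y <= i)%N]) => grt.
- (* singleton: impossible *)
  exfalso; have [y yB ny] := nsing HB iB.
  move/eqP: ny; apply; apply/ord_inj/eqP.
  by rewrite eqn_leq (forall_inP grt y yB) (forall_inP lst y yB).
- (* closing *)
  have [b bB ib] : exists2 b, b \in B & (i < b)%N.
    by move: grt; rewrite negb_forall_in => /exists_inP[b bB]; rewrite -ltnNge => ib; exists b.
  have BS : B \in map fst S.
    rewrite hS HB /openb /=; apply/andP; split; apply/exists_inP; first by exists i; rewrite ?ltnSn.
    by exists b.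
  have [bit [S0 eS]] := head_blk hS pS HB iB BS (ex_intro2 _ _ b bB ib).
  subst S.
  have [xk /andP[kx /eqP bx]] := kS _ (mem_head _ _).
  have ebit : bit = eps i.
    by move: (key_alt HB iB kx); move: bx => /= ->; case: (eps i); case: (eps xk).
  have nB0 : B != B0.
    apply/eqP => eB; have : ord0 \in B by rewrite eB /B0 blk_mem.
    by move/(forall_inP lst); rewrite leqn0 => /eqP e; rewrite e in i0.
  have B0S0 : B0 \in map fst S0.
    have : B0 \in map fst ((B, bit) :: S0).
      rewrite hS blk_in /openb /=; apply/andP; split; apply/exists_inP.
        by exists ord0; rewrite ?blk_mem.
      by exists ord_max; rewrite /B0 ?Hirr ?blk_mem.
    by rewrite [map _ _]/= in_cons eq_sym (negbTE nB0).
  case: S0 B0S0 hS uS kS pS BS kx bx => [//|e1 S1] B0S0 hS uS kS pS BS kx bx.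
  have hT : forall e, e \in e1 :: S1 -> e.1 \in P /\ e.1 != B.
    move=> e eT; have eS : e.1 \in map fst ((B, bit) :: e1 :: S1).
      by apply: map_f; rewrite in_cons eT orbT.
    split; first by move: eS; rewrite hS => /andP[].
    apply/eqP => eB; move: uS; rewrite [map _ (_ :: _)]/= => /andP[/negP hu _].
    by apply: hu; rewrite -eB; exact: (map_f fst eT).
  have hk : forall e, e \in e1 :: S1 -> exists x, iskey i.+1 e.1 x && (e.2 == ~~ eps x).
    by move=> e eT; apply: kS; rewrite in_cons eT orbT.
  have hp : pairwise (rel_at i.+1) (e1 :: S1) by move: pS => /= /andP[_].
  have [tv tk tp tn] := tail_props hT hk hp.
  have gB : geq i B = B.
    by apply/setP => y; rewrite inE; case yB: (y \in B) => //=; exact: forall_inP lst y yB.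
  have hip : forall c, ipH sigma (vecof i.+1 (B, c)) (single (iota i) c (@id_k R)) = IB B.
    move=> c; rewrite /vecof /= ipH_single kBi /single !eqxx /= ipL2_pow_id /IB kBi.
    by rewrite -card_geq_split // gB.
  exists (e1 :: S1); split.
  + rewrite -tv (coef_close nB0 lst) ebit.
    by case: (eps i); rewrite /opD /opA /lin_ext /= hip mulrC.
  + move=> B'; case: (eqVneq B' B) => [->|nB'].
      move: uS; rewrite [map _ (_ :: _)]/= => /andP[hu _]; rewrite (negbTE hu).
      apply/esym/negbTE; rewrite HB /openb /= negb_and; apply/orP; left.
      by rewrite negb_exists_in; apply/forall_inP => y yB; rewrite -leqNgt (forall_inP lst y yB).
    have := hS B'; rewrite [map _ ((B, bit) :: _)]/= in_cons (negbTE nB') /= => ->.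
    by case HB': (B' \in P) => //=; rewrite openb_noj // notin_blk.
  + by move: uS => /= /andP[_ ->].
  + exact: tk.
  + exact: tp.
- (* opening *)
  have [a aB ai] : exists2 a, a \in B & (a < i)%N.
    by move: lst; rewrite negb_forall_in => /exists_inP[a aB]; rewrite -ltnNge => ai; exists a.
  have BnS : B \notin map fst S.
    rewrite hS HB /= /openb; apply/negP => /andP[_ /exists_inP[b bB ib]].
    by move: (forall_inP grt b bB); rewrite leqNgt ib.

  have hT : forall e, e \in S -> e.1 \in P /\ e.1 != B.
    move=> e eT; have eS : e.1 \in map fst S by rewrite map_f.
    split; first by move: eS; rewrite hS => /andP[].
    by apply/eqP => eB; move: BnS; rewrite -eB eS.
  have [tv tk tp tn] := tail_props hT kS pS.
  have gB : geq i B = [set i].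
    apply/setP => y; rewrite !inE; apply/andP/eqP => [[yB iy]|->]; last by rewrite iB leqnn.
    by apply/ord_inj/eqP; rewrite eqn_leq iy (forall_inP grt y yB).
  have hv : forall c, single (iota i) c (@id_k R) = vecof i (B, c).
    move=> c; rewrite /vecof /= gB cards1; apply: single_ext => //.
  have ncl : closedAt i B = false.
    by apply/negbTE/negP => /forall_inP /(_ a aB); rewrite leqNgt ai.
  exists ((B, ~~ eps i) :: S); split.
  + rewrite (coef_eq ncl) map_cons -tv.
    by case: (eps i); rewrite /opAs /opDs /lin_ext /= mulr1 hv.
  + move=> B'; case: (eqVneq B' B) => [->|nB'].
      rewrite [map _ (_ :: _)]/= in_cons eqxx HB /=; apply/esym/andP; split; apply/exists_inP.
        by exists a.
      by exists i.
    rewrite [map _ (_ :: _)]/= in_cons (negbTE nB') /= hS.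
    by case HB': (B' \in P) => //=; rewrite openb_noj // notin_blk.
  + by rewrite /= BnS.
  + move=> e; rewrite in_cons => /orP[/eqP -> | eS]; last exact: tk.
    by exists i; rewrite /= iskey_self // eqxx.
  + rewrite /= tp andbT; apply/allP => e eS; exact: keyless_head iB (tn e eS).
-
  have [a aB ai] : exists2 a, a \in B & (a < i)%N.
    by move: lst; rewrite negb_forall_in => /exists_inP[a aB]; rewrite -ltnNge => ai; exists a.
  have [b bB ib] : exists2 b, b \in B & (i < b)%N.
    by move: grt; rewrite negb_forall_in => /exists_inP[b bB]; rewrite -ltnNge => ib; exists b.
  have BS : B \in map fst S.
    rewrite hS HB /openb /=; apply/andP; split; apply/exists_inP; first by exists i; rewrite ?ltnSn.
    by exists b.
  have [bit [S0 eS]] := head_blk hS pS HB iB BS (ex_intro2 _ _ b bB ib).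
  subst S.
  have [xk /andP[kx /eqP bx]] := kS _ (mem_head _ _).
  have ebit : bit = eps i.
    by move: (key_alt HB iB kx); move: bx => /= ->; case: (eps i); case: (eps xk).

  have hT : forall e, e \in S0 -> e.1 \in P /\ e.1 != B.
    move=> e eT; have eS : e.1 \in map fst ((B, bit) :: S0).
      by apply: map_f; rewrite in_cons eT orbT.
    split; first by move: eS; rewrite hS => /andP[].
    apply/eqP => eB; move: uS; rewrite [map _ (_ :: _)]/= => /andP[/negP hu _].
    by apply: hu; rewrite -eB; exact: (map_f fst eT).
  have hk : forall e, e \in S0 -> exists x, iskey i.+1 e.1 x && (e.2 == ~~ eps x).
    by move=> e eT; apply: kS; rewrite in_cons eT orbT.
  have hp : pairwise (rel_at i.+1) (S0) by move: pS => /= /andP[_].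
  have [tv tk tp tn] := tail_props hT hk hp.
  have ncl : closedAt i B = false.
    by apply/negbTE/negP => /forall_inP /(_ a aB); rewrite leqNgt ai.
  have hv1 : m_k (iota i) (vecof i.+1 (B, true)) = vecof i (B, false).
    rewrite /m_k /vecof /= (card_geq_split iB); apply: single_ext => [|//|t]; first by rewrite kBi.
    by rewrite /single kBi !eqxx /= exprS.
  have hv2 : m_k_adj (iota i) (vecof i.+1 (B, false)) = vecof i (B, true).
    rewrite /m_k_adj /vecof /= (card_geq_split iB); apply: single_ext => [|//|t]; first by rewrite kBi.
    by rewrite /single kBi !eqxx /= exprS.
  exists ((B, ~~ eps i) :: S0); split.
  + rewrite (coef_eq ncl) !map_cons -tv ebit.
    by case: (eps i); rewrite /opM /opMs /lin_ext /= mulr1 ?hv1 ?hv2.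
  + move=> B'.
    rewrite (_ : (B' \in map fst ((B, ~~ eps i) :: S0)) = (B' \in map fst ((B, bit) :: S0))) //.
    rewrite hS; case HB': (B' \in P) => //=.
    case: (eqVneq B' B) => [->|nB']; last by rewrite openb_noj // notin_blk.
    rewrite /openb; apply/andP/andP; (split; apply/exists_inP; [exists a => //|exists b => //]).
      exact: ltnW.
    exact: ltnW.
  + by move: uS => /=.
  + move=> e; rewrite in_cons => /orP[/eqP -> | eS]; last exact: tk.
    by exists i; rewrite /= iskey_self // eqxx.
  + rewrite /= tp andbT; apply/allP => e eS; exact: keyless_head iB (tn e eS).
Qed.


Lemma MB0 : ord_max \in B0.
Proof. by rewrite /B0 Hirr blk_mem. Qed.

Lemma HB0 : B0 \in P.
Proof. exact: blk_in. Qed.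

Lemma eq_max (y : 'I_n.+1) : (n <= y)%N -> y = ord_max.
Proof. by move=> ny; apply/ord_inj/eqP; rewrite /= eqn_leq ny andbT -ltnS ltn_ord. Qed.

Lemma base (k : 'I_N) : iota ord_max = k -> Inv n (phi sigma P eps iota ord_max (@eta_vec R N k)).
Proof.
move=> hk; have n0 := n_pos.
rewrite /phi eqxx orbT /=.
have gB : geq n B0 = [set ord_max].
  apply/setP => y; rewrite !inE; apply/andP/eqP => [[_ ny]|->]; first exact: eq_max.
  by rewrite MB0 /=.
have coefn : coef n = 1.
  rewrite /coef big1 // => B /andP[HB /andP[nB cl]]; exfalso.
  have [y yB] : exists y, y \in B.
    by case: partP => _ _ s0; apply/set0Pn; apply: contraNneq s0 => <-.
  have ey := eq_max (forall_inP cl y yB).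
  by move/eqP: nB; apply; apply: blk_same HB HB0 yB _; rewrite ey MB0.
exists [:: (B0, ~~ eps ord_max)]; split.
- rewrite coefn.
  case: (eps ord_max); rewrite /opM /opMs /lin_ext /eta_vec /= mulr1;
    rewrite /m_k /m_k_adj /vecof /= gB cards1;
    (congr [:: (_, [:: _])]; apply: single_ext => [|//|t]; first by rewrite (kB_eq HB0 MB0));
    by rewrite hk eqxx /one_k mulr1 expr1.
- move=> B'; rewrite mem_seq1; case: (eqVneq B' B0) => [->|nB].
    rewrite HB0 /openb /=; apply/esym/andP; split; apply/exists_inP.
      by exists ord0; rewrite ?blk_mem.
    by exists ord_max; rewrite ?MB0.
  case HB': (B' \in P) => //=; apply/esym/negbTE/negP => /andP[_ /exists_inP[b bB nb]].
  have eb := eq_max nb.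
  by move/eqP: nB; apply; apply: blk_same HB' HB0 bB _; rewrite eb MB0.
- by [].
- move=> e; rewrite mem_seq1 => /eqP ->; exists ord_max; rewrite /= eqxx andbT.
  rewrite /iskey MB0 leqnn /=; apply/forall_inP => y _; apply/implyP => ny; exact: ny.
- by [].
Qed.

Lemma final (k : 'I_N) x : iota ord0 = k -> Inv 1 x ->
  ipF sigma (phi sigma P eps iota ord0 x) (@eta_vec R N k) = \prod_(B in P) IB B.
Proof.
move=> hk [S [-> hS uS kS pS]]; have n0 := n_pos.
have hS1 : forall B', (B' \in map fst S) = (B' == B0).
  move=> B'; rewrite hS; case: (eqVneq B' B0) => [->|nB].
    rewrite HB0 /openb /=; apply/andP; split; apply/exists_inP.
      by exists ord0; rewrite ?blk_mem.
    by exists ord_max; rewrite ?MB0.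
  case HB': (B' \in P) => //=; apply/negbTE/negP => /andP[/exists_inP[a aB a1] _].
  have ea : a = ord0 by apply/ord_inj; move: a1; rewrite ltnS leqn0 => /eqP.
  by move/eqP: nB; apply; apply: blk_same HB' HB0 aB _; rewrite ea blk_mem.
have pe : perm_eq (map fst S) [:: B0] by apply: uniq_perm => // B'; rewrite hS1 mem_seq1.
have eS : map fst S = [:: B0].
  move: (perm_size pe) (perm_mem pe); case: (map fst S) => [|B1 [|//]] //= _ h.
  by have := h B1; rewrite !inE eqxx => /esym /eqP ->.
case: S eS kS {hS uS pS hS1 pe} => [|[B1 bit] [|//]] //= [eB1] kS; subst B1.
have [xk /andP[kx /eqP bx]] := kS _ (mem_head _ _).
have kx' : iskey (@ord0 n).+1 B0 xk := kx.
have ebit : bit = eps ord0.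
  by move: (key_alt HB0 (blk_mem ord0) kx'); move: bx => /= ->; case: (eps ord0); case: (eps xk).
rewrite /phi eqxx /=.
have g0 : geq (@ord0 n) B0 = B0 by apply/setP => y; rewrite inE andbT.
have cB0 : #|B0| = #|geq 1 B0|.+1 by rewrite -{1}g0 (card_geq_split (blk_mem ord0)).
have kB0 : kB B0 = iota ord0 := kB_eq HB0 (blk_mem ord0).
have hw : forall c : bool, (fun t : R => cR t * single (kB B0) c (fun t : R => cR t ^+ #|geq 1 B0|) (iota ord0) c t)
    = (fun t : R => cR t ^+ #|B0|).
  by move=> c; apply: boolp.funext => t; rewrite /single kB0 !eqxx /= cB0 exprS.
have hw' : forall (c : bool) mu, ipL2 mu (fun t : R => cR t * single (kB B0) c
    (fun t0 : R => cR t0 ^+ #|geq 1 B0|) (iota ord0) c t) (@one_k R)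
    = cR (Rintegral mu setT (fun t => t ^+ #|B0|)).
  by move=> c mu; rewrite hw ipL2_pow_one.
have hw'' : forall (c : bool), ipL2 (sigma (iota ord0)) (fun t : R => cR t * single (kB B0) c
    (fun t0 : R => cR t0 ^+ #|geq 1 B0|) (iota ord0) c t) (@one_k R) = IB B0.
  by move=> c; rewrite hw' /IB kB0.
have hev : forall c, (fun (k' : 'I_N) (_ : bool) => if k' == k then @one_k R else (fun _ => 0))
    (iota ord0) c = @one_k R by move=> c; rewrite /= hk eqxx.
have c1 : coef 1 = \prod_(B in P | B != B0) IB B.
  rewrite /coef; apply: eq_bigl => B; case HB: (B \in P) => //=.
  case: (eqVneq B B0) => [//|nB] /=; apply/forall_inP => y yB.
  rewrite lt0n; apply/negP => /eqP y0.
  have ey : y = ord0 by apply/ord_inj.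
  by move/eqP: nB; apply; apply: blk_same HB HB0 yB _; rewrite ey blk_mem.
rewrite ebit (bigD1 B0 HB0) /= -c1.
have E : forall z w : R[i], z * Num.conj 1 * w = w * z by move=> z w; rewrite conjC1 mulr1 mulrC.
case: (eps ord0); rewrite /opM /opMs /lin_ext /ipF /eta_vec /= !big_seq1 /ipT /= big_seq1 /=;
  rewrite /m_k /m_k_adj /vecof /= ipH_single (hev true).
  set L := ipL2 _ _ _; have -> : L = IB B0 by rewrite /L; exact: hw'' true.
  by rewrite mulr1; exact: E.
set L := ipL2 _ _ _; have -> : L = IB B0 by rewrite /L; exact: hw'' false.
by rewrite mulr1; exact: E.
Qed.

Definition stf (k : 'I_N) (j : nat) :=
  foldr (fun i y => phi sigma P eps iota i y) (@eta_vec R N k) (drop j (enum 'I_n.+1)).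

Lemma stf_step k j : (j < n.+1)%N -> stf k j = phi sigma P eps iota (inord j) (stf k j.+1).
Proof.
move=> hj; rewrite /stf (drop_nth ord0) ?size_enum_ord // /=.
have -> : nth ord0 (enum 'I_n.+1) j = inord j by apply/ord_inj; rewrite nth_enum_ord // inordK.
by [].
Qed.

Lemma stf_end k : stf k n.+1 = @eta_vec R N k.
Proof. by rewrite /stf drop_oversize // size_enum_ord. Qed.

Lemma all_inv k : iota ord_max = k -> forall m, (m < n)%N -> Inv (n - m) (stf k (n - m)).
Proof.
move=> hk; elim => [|m IH] hm.
  rewrite subn0 stf_step // stf_end (_ : inord n = ord_max); first exact: base.
  by apply/ord_inj; rewrite inordK.
set j := (n - m.+1)%N.
have ej : j.+1 = (n - m)%N by rewrite /j subnSK // ltnW.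
have hj : (j < n.+1)%N by rewrite /j ltnS leq_subr.
have vj : nat_of_ord (inord j : 'I_n.+1) = j := inordK hj.
rewrite stf_step //.
have H' : Inv j.+1 (stf k j.+1) by rewrite ej; exact: IH (ltnW hm).
have j0 : (0 < j)%N by rewrite /j subn_gt0.
have jn : (j < n)%N by rewrite /leq -/(leq j.+1 n) ej leq_subr.
by have := @step (inord j) (stf k j.+1); rewrite vj; apply.
Qed.

Lemma main_rhs (k : 'I_N) : iota ord0 = k -> iota ord_max = k ->
  ipF sigma (phi_prod sigma P eps iota (@eta_vec R N k)) (@eta_vec R N k) = \prod_(B in P) IB B.
Proof.
move=> hk0 hkM; have n0 := n_pos.
have -> : phi_prod sigma P eps iota (@eta_vec R N k) = stf k 0 by rewrite /stf drop0.
rewrite stf_step // (_ : inord 0 = ord0); last by apply/ord_inj; rewrite inordK.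
apply: final hk0 _.
have e1 : (n - n.-1 = 1)%N by move: n0; case: (n) => // n' _; rewrite /= subSn // subnn.
by have := all_inv hkM (m := n.-1); rewrite e1; apply; rewrite ltn_predL.
Qed.

End Main.

Theorem lemma4p2 (Rr : realType) (A : lalgType Rr[i]) (st : A -> A) (tau : A -> Rr[i])
    (N : nat) (X : 'I_N -> A) (sigma : 'I_N -> {finite_measure set Rr -> \bar Rr})
    (Hst : is_star st) (Htau : is_faithful_tracial_state st tau)
    (Hfree : star_free st tau X) (HRd : forall k, R_diagonal st tau (X k))
    (Hsym : forall k, symmetric_measure (sigma k))
    (Hcpt : forall k, compact_support (sigma k))
    (Hcum : forall (k : 'I_N) (s : seq bool), cyc_alt s ->
       kappa tau [seq xpow st (X k) b | b <- s]
       = cR (Rintegral (sigma k) setT (fun t => t ^+ size s)))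
    (n : nat) (eps : 'I_n.+1 -> bool) (iota : 'I_n.+1 -> 'I_N) (k : 'I_N)
    (Hi1 : iota ord0 = k) (HiR : iota ord_max = k)
    (P : {set {set 'I_n.+1}}) (HNC : is_NC P)
    (Hirr : finset.pblock P ord0 = finset.pblock P ord_max)
    (Hblocks : forall B, B \in P ->
       (forall i j, i \in B -> j \in B -> iota i = iota j) /\
       cyc_alt [seq eps i | i <- enum B]) :
  kappa_pi tau P (fun j => xpow st (X (iota j)) (eps j))
  = ipF sigma (phi_prod sigma P eps iota (@eta_vec Rr N k)) (@eta_vec Rr N k).

Proof.
rewrite (main_rhs (fun x => (sigma x : {measure set Rr -> \bar Rr})) HNC Hirr Hblocks Hi1 HiR).
rewrite /kappa_pi; apply: eq_bigr => B HB.
have [hi hc] := Hblocks B HB.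
rewrite (_ : [seq _ | _ <- enum B] = [seq xpow st (X (kB iota B)) b | b <- [seq eps i | i <- enum B]]).
  by rewrite Hcum // /IB size_map -cardE.
rewrite -map_comp; apply/eq_in_map => i; rewrite mem_enum => iB /=.
by rewrite (kB_eq Hblocks HB iB).
Qed.
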